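(* Let $k_1,k_2\ge1$ and $n=2^{k_1k_2}-1$. Suppose $n=n_1n_2$ with $n_1,n_2>1$ relatively prime, and let $\mathcal A=\{0,\dots,n_1-1\}\times\{0,\dots,n_2-1\}$. Let $\Lambda\subseteq\mathbb Z^2$ be a lattice that induces a lattice tiling of $\mathcal A$ and also of a shape $\mathcal S$ (necessarily $|\mathcal S|=n$). Let $\delta$ be a nonzero ternary vector such that $(\Lambda,\mathcal S,\delta)$ defines a folding. Let $s_0s_1\cdots s_{n-1}$ be an m-sequence (a binary maximal-length linear shift register sequence) of period $n$. Fold it into $\mathcal S$ by $\delta$: with folded-row $p_0,p_1,\dots$ of $(\Lambda,\mathcal S,\delta)$, write $s_i$ at $p_i$ for $0\le i<n$. Likewise fold it into $\mathcal A$ by $\delta$ using the folded-row of $(\Lambda,\mathcal A,\delta)$. Then the folded shape $\mathcal S$ has the $k_1\times k_2$ window property if and only if the folded array $\mathcal A$ has the $k_1\times k_2$ window property.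
   Context: A shape is a finite nonempty set $\mathcal S\subset\mathbb Z^2$ containing the origin. A lattice is $\Lambda=\{u_1v_1+u_2v_2:u_i\in\mathbb Z\}$ for linearly independent $v_1,v_2\in\mathbb Z^2$. $\Lambda$ induces a lattice tiling of $\mathcal S$ if the translates $\mathcal S+\lambda$, $\lambda\in\Lambda$, are pairwise disjoint and cover $\mathbb Z^2$. Then $c(x)$ denotes the unique $\lambda\in\Lambda$ with $x\in\mathcal S+\lambda$. For a nonzero $\delta\in\{-1,0,1\}^2$, the folded-row is $p_0=0$, $p_{k+1}=(p_k+\delta)-c(p_k+\delta)$. $(\Lambda,\mathcal S,\delta)$ defines a folding if every point of $\mathcal S$ occurs in the folded-row. When a sequence $s_0\cdots s_{n-1}$ with $n=|\mathcal S|$ is folded into $\mathcal S$, the resulting array is extended periodically to $f:\mathbb Z^2\to\{0,1\}$ by $f(p_i+\lambda)=s_i$ for $0\le i<n$ and $\lambda\in\Lambda$ (i.e. every copy $\mathcal S+\lambda$ repeats the contents of $\mathcal S$). The folded shape has the $k_1\times k_2$ window property if every nonzero binary $k_1\times k_2$ matrix $M$ occurs exactly once as a window, i.e. there is exactly one $x\in\mathcal S$ with $f(x+(r,c))=M_{r,c}$ for all $0\le r<k_1$, $0\le c<k_2$. *)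

(* Defs.v *)
From Stdlib Require Import ZArith Arith List Bool.
Open Scope Z_scope.

Definition pt := (Z * Z)%type.
Definition padd (x y : pt) : pt := (fst x + fst y, snd x + snd y).
Definition psub (x y : pt) : pt := (fst x - fst y, snd x - snd y).

Definition in_lattice (v1 v2 : pt) (x : pt) : Prop :=
  exists u1 u2 : Z, x = (u1 * fst v1 + u2 * fst v2, u1 * snd v1 + u2 * snd v2).

Definition lin_indep (v1 v2 : pt) : Prop :=
  fst v1 * snd v2 - snd v1 * fst v2 <> 0.

Definition is_shape (S : pt -> Prop) : Prop :=
  (exists l : list pt, forall x, S x <-> In x l) /\ S (0, 0).

Definition lattice_tiling (v1 v2 : pt) (S : pt -> Prop) : Prop :=
  (forall l1 l2 x, in_lattice v1 v2 l1 -> in_lattice v1 v2 l2 ->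
     S (psub x l1) -> S (psub x l2) -> l1 = l2) /\
  (forall x, exists l, in_lattice v1 v2 l /\ S (psub x l)).

Definition ternary_nonzero (d : pt) : Prop :=
  -1 <= fst d <= 1 /\ -1 <= snd d <= 1 /\ d <> (0, 0).

(* p is the folded-row of (Lambda, S, delta):
   p_0 = 0, p_{k+1} = (p_k + delta) - c(p_k + delta), where c(y) is the
   (unique, by tiling) lattice point with y in S + c(y). *)
Definition folded_row (v1 v2 : pt) (S : pt -> Prop) (d : pt) (p : nat -> pt) : Prop :=
  p 0%nat = (0, 0) /\
  forall k : nat, exists l, in_lattice v1 v2 l /\ S (psub (padd (p k) d) l) /\
     p (Datatypes.S k) = psub (padd (p k) d) l.

Definition defines_folding (v1 v2 : pt) (S : pt -> Prop) (d : pt) : Prop :=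
  forall p, folded_row v1 v2 S d p -> forall x, S x -> exists k, p k = x.

Definition folded_array (v1 v2 : pt) (p : nat -> pt) (n : nat) (s : nat -> bool)
  (f : pt -> bool) : Prop :=
  forall i l, (i < n)%nat -> in_lattice v1 v2 l -> f (padd (p i) l) = s i.

Definition window_property (k1 k2 : nat) (S : pt -> Prop) (f : pt -> bool) : Prop :=
  forall M : nat -> nat -> bool,
    (exists r c, (r < k1)%nat /\ (c < k2)%nat /\ M r c = true) ->
    exists! x, S x /\
      forall r c, (r < k1)%nat -> (c < k2)%nat ->
        f (padd x (Z.of_nat r, Z.of_nat c)) = M r c.

Fixpoint lfsr_sum (c s : nat -> bool) (i k j : nat) : bool :=
  match j with
  | O => false
  | Datatypes.S j' => xorb (lfsr_sum c s i k j') (c j && s (i + k - j)%nat)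
  end.

Definition lfsr_sequence (k : nat) (s : nat -> bool) : Prop :=
  exists c : nat -> bool, forall i, s (i + k)%nat = lfsr_sum c s i k k.

Definition least_period (n : nat) (s : nat -> bool) : Prop :=
  (0 < n)%nat /\ (forall i, s (i + n)%nat = s i) /\
  (forall m, (0 < m < n)%nat -> ~ (forall i, s (i + m)%nat = s i)).

Definition m_sequence (k : nat) (s : nat -> bool) : Prop :=
  lfsr_sequence k s /\ least_period (2 ^ k - 1)%nat s.

Definition rect (n1 n2 : nat) (x : pt) : Prop :=
  0 <= fst x < Z.of_nat n1 /\ 0 <= snd x < Z.of_nat n2.

(* Main.v *)
Require Import Defs.
From Stdlib Require Import ZArith Arith List Bool Lia Permutation ClassicalEpsilon.

Lemma pt_ext (a b : pt) : fst a = fst b -> snd a = snd b -> a = b.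
Proof. destruct a, b; simpl; intros; subst; reflexivity. Qed.

Ltac ptring := apply pt_ext; unfold padd, psub; cbn [fst snd]; ring.

Section L.
Variables v1 v2 : pt.
Notation L := (in_lattice v1 v2).

Lemma lat0 : L (0,0).
Proof. exists 0, 0. apply pt_ext; simpl; ring. Qed.

Lemma latD x y : L x -> L y -> L (padd x y).
Proof. intros [a [b ->]] [c [e ->]]. exists (a+c), (b+e). ptring. Qed.

Lemma latB x y : L x -> L y -> L (psub x y).
Proof. intros [a [b ->]] [c [e ->]]. exists (a-c), (b-e). ptring. Qed.

Lemma latM z x : L x -> L (z * fst x, z * snd x).
Proof. intros [a [b ->]]. exists (z*a), (z*b). apply pt_ext; simpl; ring. Qed.

Lemma tile_uniq (A : pt -> Prop) : lattice_tiling v1 v2 A ->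
  forall a b, A a -> A b -> L (psub a b) -> a = b.
Proof.
  intros [hu _] a b Ha Hb Hab.
  assert (E : (0,0) = psub a b).
  { apply (hu (0,0) (psub a b) a lat0 Hab).
    - replace (psub a (0,0)) with a by ptring. exact Ha.
    - replace (psub a (psub a b)) with b by ptring. exact Hb. }
  apply pt_ext.
  - apply (f_equal fst) in E. unfold psub in E; simpl in E. lia.
  - apply (f_equal snd) in E. unfold psub in E; simpl in E. lia.
Qed.

Definition psum (l : list pt) : pt := fold_right padd (0,0) l.

Lemma psum_perm l l' : Permutation l l' -> psum l = psum l'.
Proof.
  induction 1; simpl; auto.
  - rewrite IHPermutation; reflexivity.
  - ptring.
  - congruence.
Qed.

Lemma psum_lat l : (forall x, In x l -> L x) -> L (psum l).
Proof.
  induction l; simpl; intros H. apply lat0.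
  apply latD; auto.
Qed.

Lemma period (d : pt) (A : pt -> Prop) (T : list pt)
  (hT : forall x, A x <-> In x T) (hnd : NoDup T) (ht : lattice_tiling v1 v2 A) :
  L (Z.of_nat (length T) * fst d, Z.of_nat (length T) * snd d).
Proof.
  pose proof ht as [hu he].
  assert (Hlf : exists lf : pt -> pt, forall x, L (lf x) /\ A (psub x (lf x))).
  { exists (fun x => proj1_sig (constructive_indefinite_description _ (he x))).
    intro x. exact (proj2_sig (constructive_indefinite_description _ (he x))). }
  destruct Hlf as [lf hlf].
  set (phi := fun a => psub (padd a d) (lf (padd a d))).
  assert (HP : Permutation (map phi T) T).
  { apply Permutation_map_same_l.
    - apply FinFun.Injective_map_NoDup_in; auto.
      intros a b Ha Hb E. apply (tile_uniq A ht).
      + apply hT; auto.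
      + apply hT; auto.
      + replace (psub a b) with (psub (lf (padd a d)) (lf (padd b d))).
        * apply latB; apply hlf.
        * unfold phi in E. apply pt_ext.
          -- apply (f_equal fst) in E. unfold psub, padd in *; simpl in *. lia.
          -- apply (f_equal snd) in E. unfold psub, padd in *; simpl in *. lia.
    - intros y Hy. apply in_map_iff in Hy. destruct Hy as [a [<- _]].
      apply hT. apply hlf. }
  assert (Hid : forall l : list pt,
    psum (map (fun a => lf (padd a d)) l) =
    psub (padd (psum l) (Z.of_nat (length l) * fst d, Z.of_nat (length l) * snd d))
         (psum (map phi l))).
  { induction l as [|a l IH].
    - simpl. ptring.
    - unfold psum in *; cbn [map fold_right length] in *. rewrite Nat2Z.inj_succ. rewrite IH.
      unfold phi. apply pt_ext; unfold padd, psub; cbn [fst snd]; ring. }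
  assert (HL : L (psum (map (fun a => lf (padd a d)) T))).
  { apply psum_lat. intros x Hx. apply in_map_iff in Hx.
    destruct Hx as [a [<- _]]. apply hlf. }
  rewrite Hid in HL. rewrite (psum_perm _ _ HP) in HL.
  replace (Z.of_nat (length T) * fst d, Z.of_nat (length T) * snd d)
    with (psub (padd (psum T) (Z.of_nat (length T) * fst d, Z.of_nat (length T) * snd d))
         (psum T)) by ptring.
  exact HL.
Qed.

Lemma row_coset (B : pt -> Prop) d p : folded_row v1 v2 B d p ->
  forall k, L (psub (p k) (Z.of_nat k * fst d, Z.of_nat k * snd d)).
Proof.
  intros [h0 hs] k. induction k.
  - rewrite h0. replace (psub (0,0) _) with ((0,0) : pt) by ptring. apply lat0.
  - destruct (hs k) as [l [Ll [_ E]]]. rewrite E.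
    replace (psub (psub (padd (p k) d) l) (Z.of_nat (S k) * fst d, Z.of_nat (S k) * snd d))
      with (psub (psub (p k) (Z.of_nat k * fst d, Z.of_nat k * snd d)) l).
    + apply latB; auto.
    + rewrite Nat2Z.inj_succ. ptring.
Qed.

Lemma row_in (B : pt -> Prop) d p : folded_row v1 v2 B d p -> B (0,0) ->
  forall k, B (p k).
Proof.
  intros [h0 hs] H0 k. destruct k. rewrite h0; auto.
  destruct (hs k) as [l [_ [HB E]]]. rewrite E; auto.
Qed.

Lemma row_period (B : pt -> Prop) d p N : lattice_tiling v1 v2 B ->
  folded_row v1 v2 B d p -> B (0,0) -> (0 < N)%nat ->
  L (Z.of_nat N * fst d, Z.of_nat N * snd d) ->
  forall k, p (k mod N)%nat = p k.
Proof.
  intros ht hr H0 hN HNd k.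
  apply (tile_uniq B ht); try apply (row_in B d p hr H0).
  set (r := (k mod N)%nat). set (q := (k / N)%nat).
  assert (HK : Z.of_nat k = Z.of_nat q * Z.of_nat N + Z.of_nat r).
  { unfold q, r. pose proof (Nat.div_mod_eq k N). lia. }
  replace (psub (p r) (p k)) with
    (psub (psub (psub (p r) (Z.of_nat r * fst d, Z.of_nat r * snd d))
                (psub (p k) (Z.of_nat k * fst d, Z.of_nat k * snd d)))
          (Z.of_nat q * fst (Z.of_nat N * fst d, Z.of_nat N * snd d),
           Z.of_nat q * snd (Z.of_nat N * fst d, Z.of_nat N * snd d))).
  - apply latB. apply latB; apply (row_coset B d p hr). apply latM; auto.
  - rewrite HK. clearbody r q. ptring.
Qed.

Lemma wtrans (A B : pt -> Prop) f g k1 k2 :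
  lattice_tiling v1 v2 A -> lattice_tiling v1 v2 B ->
  (forall y z, L (psub y z) -> f y = g z) ->
  window_property k1 k2 A f -> window_property k1 k2 B g.
Proof.
  intros htA htB hfg W M HM.
  destruct (W M HM) as [x [[Ax Hx] Hu]].
  destruct (proj2 htB x) as [l [Ll Bx]].
  exists (psub x l). split.
  - split; auto. intros r c hr hc. rewrite <- (Hx r c hr hc). symmetry. apply hfg.
    replace (psub _ _) with l by ptring. auto.
  - intros b [Bb Hb].
    destruct (proj2 htA b) as [l' [Ll' Ab]].
    assert (Ex : x = psub b l').
    { apply Hu. split; auto. intros r c hr hc. rewrite <- (Hb r c hr hc). apply hfg.
      replace (psub _ _) with (psub (0,0) l') by ptring. apply latB; auto. apply lat0. }
    apply (tile_uniq B htB); auto.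
    rewrite Ex. replace (psub _ _) with (psub (psub (0,0) l') l) by ptring.
    apply latB; auto. apply latB; auto. apply lat0.
Qed.

End L.

Definition Trect (n1 n2 : nat) : list pt :=
  map (fun k => (Z.of_nat (k / n2), Z.of_nat (k mod n2))) (seq 0 (n1 * n2)).

Lemma Trect_len n1 n2 : length (Trect n1 n2) = (n1 * n2)%nat.
Proof. unfold Trect. rewrite length_map, length_seq. reflexivity. Qed.

Lemma Trect_nodup n1 n2 : (0 < n2)%nat -> NoDup (Trect n1 n2).
Proof.
  intros h. unfold Trect. apply FinFun.Injective_map_NoDup_in; [|apply seq_NoDup].
  intros a b _ _ E. injection E as E1 E2.
  apply Nat2Z.inj in E1. apply Nat2Z.inj in E2.
  rewrite (Nat.div_mod_eq a n2), (Nat.div_mod_eq b n2). lia.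
Qed.

Lemma Trect_in n1 n2 : (0 < n2)%nat -> forall x, rect n1 n2 x <-> In x (Trect n1 n2).
Proof.
  intros h [x y]. unfold rect, Trect; simpl. rewrite in_map_iff. split.
  - intros [[hx1 hx2] [hy1 hy2]].
    exists (Z.to_nat x * n2 + Z.to_nat y)%nat. split.
    + assert (D : ((Z.to_nat x * n2 + Z.to_nat y) / n2 = Z.to_nat x)%nat).
      { rewrite Nat.div_add_l by lia. rewrite Nat.div_small by lia. lia. }
      assert (Mo : ((Z.to_nat x * n2 + Z.to_nat y) mod n2 = Z.to_nat y)%nat).
      { rewrite Nat.add_comm, Nat.Div0.mod_add, Nat.mod_small by lia. lia. }
      rewrite D, Mo. f_equal; lia.
    + apply in_seq. nia.
  - intros [k [E Hk]]. injection E as <- <-. apply in_seq in Hk.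
    pose proof (Nat.mod_upper_bound k n2 ltac:(lia)).
    assert (k / n2 < n1)%nat by (apply Nat.Div0.div_lt_upper_bound; lia).
    lia.
Qed.

Theorem mainTheorem11
  (k1 k2 n1 n2 : nat) (hk1 : (1 <= k1)%nat) (hk2 : (1 <= k2)%nat)
  (hn : (n1 * n2 = 2 ^ (k1 * k2) - 1)%nat)
  (hn1 : (1 < n1)%nat) (hn2 : (1 < n2)%nat) (hcop : Nat.gcd n1 n2 = 1%nat)
  (v1 v2 : pt) (hindep : lin_indep v1 v2)
  (S : pt -> Prop) (hS : is_shape S)
  (htA : lattice_tiling v1 v2 (rect n1 n2))
  (htS : lattice_tiling v1 v2 S)
  (d : pt) (hd : ternary_nonzero d)
  (hfold : defines_folding v1 v2 S d)
  (s : nat -> bool) (hs : m_sequence (k1 * k2) s)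
  (pS pA : nat -> pt)
  (hpS : folded_row v1 v2 S d pS) (hpA : folded_row v1 v2 (rect n1 n2) d pA)
  (fS fA : pt -> bool)
  (hfS : folded_array v1 v2 pS (2 ^ (k1 * k2) - 1) s fS)
  (hfA : folded_array v1 v2 pA (2 ^ (k1 * k2) - 1) s fA) :
  window_property k1 k2 S fS <-> window_property k1 k2 (rect n1 n2) fA.
Proof.
  rewrite <- hn in hfS, hfA.
  set (N := (n1 * n2)%nat) in *.
  assert (hN : (0 < N)%nat) by (unfold N; nia).
  assert (HNd : in_lattice v1 v2 (Z.of_nat N * fst d, Z.of_nat N * snd d)).
  { pose proof (period v1 v2 d (rect n1 n2) (Trect n1 n2) (Trect_in n1 n2 ltac:(lia))
      (Trect_nodup n1 n2 ltac:(lia)) htA) as H.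
    rewrite Trect_len in H. exact H. }
  assert (HS0 : S (0,0)) by apply hS.
  assert (HA0 : rect n1 n2 (0,0)) by (unfold rect; simpl; lia).
  assert (key : forall y z, in_lattice v1 v2 (psub y z) -> fS y = fA z).
  { intros y z Hyz.
    destruct (proj2 htS y) as [l [Ll Sy]].
    destruct (hfold pS hpS _ Sy) as [k Ek].
    set (r := (k mod N)%nat).
    assert (Hr : (r < N)%nat) by (apply Nat.mod_upper_bound; lia).
    assert (Epr : pS r = pS k) by (apply (row_period v1 v2 S d pS N); auto).
    assert (Ey : y = padd (pS r) l) by (rewrite Epr, Ek; ptring).
    assert (LzA : in_lattice v1 v2 (psub z (pA r))).
    { replace (psub z (pA r)) with
        (psub (padd (psub (psub (0,0) (psub y z)) (psub (pA r) (Z.of_nat r * fst d, Z.of_nat r * snd d)))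
                    (psub (pS r) (Z.of_nat r * fst d, Z.of_nat r * snd d))) (psub (0,0) l)).
      - apply latB. apply latD. apply latB. apply latB. apply lat0. auto.
        apply (row_coset v1 v2 _ d pA hpA). apply (row_coset v1 v2 _ d pS hpS).
        apply latB; auto. apply lat0.
      - rewrite Ey. ptring. }
    assert (Ez : z = padd (pA r) (psub z (pA r))) by ptring.
    rewrite Ey, Ez, hfS, hfA; auto. }
  split.
  - apply (wtrans v1 v2 S (rect n1 n2) fS fA k1 k2 htS htA key).
  - apply (wtrans v1 v2 (rect n1 n2) S fA fS k1 k2 htA htS).
    intros y z H. symmetry. apply key.
    replace (psub z y) with (psub (0,0) (psub y z)) by ptring.
    apply latB; auto. apply lat0.
Qed.
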